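(* For any constant $\epsilon\in(0,1)$, every deterministic $O(1)$-approximation algorithm for the $1$-region problem must make at least $(1-\epsilon)\log\log n$ adaptive queries to the sorted input list $X[1,n]$ (in the worst case), for all sufficiently large $n$.
   Context: Logarithms are base $2$. The input is a list $X[1,n]$ whose entries are in $\{0,1\}$, sorted in nondecreasing order; the algorithm accesses it only by adaptive queries, each revealing one entry. For $d>1$, a $d$-approximate $1$-region is an interval $R=[s,n]$ such that at least $\frac{|R|}{d}$ numbers in $X[s,n]$ equal $1$ and $[s,n]$ contains all positions $j$ with $X[j]=1$; an $O(1)$-approximation algorithm outputs a $d$-approximate $1$-region for some constant $d>1$ independent of $n$. *)

(* Defs.v *)
From Stdlib Require Import Reals.
From mathcomp Require Import all_boot.

Definition log2 (x : R) : R := Rdiv (ln x) (ln (INR 2)).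

(* A deterministic adaptive query algorithm = a (binary) decision tree.
   [Query i t0 t1] reads entry X[i] (1-indexed) and continues with t0 if
   it is 0, t1 if it is 1; [Leaf s] outputs the region [s, n]. *)
Inductive dtree : Type :=
| Leaf : nat -> dtree
| Query : nat -> dtree -> dtree -> dtree.

(* Input X[1,n] is a list of size n; X[j] = nth false X (j-1).
   (Out-of-range queries return a fixed 0 and carry no information.) *)
Definition entry (X : seq bool) (j : nat) : bool := nth false X j.-1.

Definition valid_input (n : nat) (X : seq bool) : Prop :=
  size X = n /\ sorted (fun a b : bool => a ==> b) X.

Fixpoint output (T : dtree) (X : seq bool) : nat :=
  match T with
  | Leaf s => s
  | Query i t0 t1 => if entry X i then output t1 X else output t0 X
  end.

Fixpoint nqueries (T : dtree) (X : seq bool) : nat :=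
  match T with
  | Leaf _ => 0
  | Query i t0 t1 => (if entry X i then nqueries t1 X else nqueries t0 X).+1
  end.

Definition ones_in (X : seq bool) (s n : nat) : nat :=
  count (entry X) (iota s (n.+1 - s)).

(* R = [s, n] (with s = n+1 meaning the empty interval) is a
   d-approximate 1-region: at least |R|/d entries of X[s,n] equal 1, and
   R contains every position j with X[j] = 1. *)
Definition approx_region (d : R) (n : nat) (X : seq bool) (s : nat) : Prop :=
  (1 <= s <= n.+1)%N /\
  Rle (Rdiv (INR (n.+1 - s)) d) (INR (ones_in X s n)) /\
  (forall j : nat, (1 <= j <= n)%N -> entry X j -> (s <= j)%N).

Definition solves (d : R) (n : nat) (T : dtree) : Prop :=
  forall X, valid_input n X -> approx_region d n X (output T X).

(* Main.v *)
Require Import Defs.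
From Stdlib Require Import Reals Lra Lia.
From mathcomp Require Import zify.
From mathcomp Require Import all_boot.

Lemma tree_bound (T : dtree) : forall (q : nat) (S : seq (seq bool)),
  (forall X, X \in S -> nqueries T X <= q) ->
  size (undup (map (output T) S)) <= 2 ^ q.
Proof.
elim: T => [s|i t0 IH0 t1 IH1] q S H.
  apply: (@leq_trans (size [:: s])); last by rewrite /= expn_gt0.
  apply: uniq_leq_size; first exact: undup_uniq.
  by move=> y; rewrite mem_undup => /mapP [X _ ->]; rewrite inE.
case: q H => [|q] H.
  case: S H => [|X S] H //. by have := H X (mem_head _ _).
pose S0 := [seq X <- S | ~~ entry X i]. pose S1 := [seq X <- S | entry X i].
have H0 : size (undup (map (output t0) S0)) <= 2 ^ q.
  apply: IH0 => X; rewrite mem_filter => /andP [/negbTE E XS].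
  by have := H X XS; rewrite /= E.
have H1 : size (undup (map (output t1) S1)) <= 2 ^ q.
  apply: IH1 => X; rewrite mem_filter => /andP [E XS].
  by have := H X XS; rewrite /= E.
rewrite expnS mul2n -addnn.
apply: leq_trans (leq_add H0 H1).
rewrite -size_cat; apply: uniq_leq_size; first exact: undup_uniq.
move=> y; rewrite mem_undup => /mapP [X XS ->] /=.
rewrite mem_cat !mem_undup.
case E: (entry X i).
  apply/orP; right; apply/mapP; exists X => //; by rewrite mem_filter E.
apply/orP; left; apply/mapP; exists X => //; by rewrite mem_filter E.
Qed.

Definition inp (n m : nat) : seq bool := nseq (n - m) false ++ nseq m true.

Lemma entry_inp n m j : m <= n -> 1 <= j ->
  entry (inp n m) j = (n - m < j) && (j <= n).
Proof.
move=> mn j1; rewrite /entry /inp nth_cat size_nseq !nth_nseq.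
case: j j1 => [|j] // _ /=.
case: ltnP => h1; case: ltnP => h2 //=; lia.
Qed.

Lemma valid_inp n m : m <= n -> valid_input n (inp n m).
Proof.
move=> mn; split; first by rewrite /inp size_cat !size_nseq subnK.
rewrite /inp; case: (n - m) => [|a] /=.
  by case: m {mn} => [|m] //=; elim: m => //.
elim: a => [|a IH] /=.
  by case: m {mn} => [|m] //=; elim: m => //.
by [].
Qed.

Lemma ones_inp n m s : m <= n -> 1 <= s -> ones_in (inp n m) s n <= m.
Proof.
move=> mn s1; rewrite /ones_in -size_filter.
rewrite -[X in _ <= X](size_iota (n - m).+1 m).
apply: uniq_leq_size; first by rewrite filter_uniq // iota_uniq.
move=> j; rewrite mem_filter mem_iota => /andP [E J].
move: J => /andP [J1 _].
rewrite entry_inp // in E; last by apply: leq_trans J1.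
move/andP: E => [E1 E2]. rewrite mem_iota; apply/andP; split; lia.
Qed.

Lemma region_inp n m (d : R) s : 1 <= m -> m <= n -> Rlt 0 d ->
  approx_region d n (inp n m) s ->
  m <= n.+1 - s /\ Rle (INR (n.+1 - s)) (Rmult d (INR m)).
Proof.
move=> m1 mn d0 [/andP [s1 s2] [H1 H2]].
have hs : s <= (n - m).+1.
  apply: H2.
    apply/andP; split; lia.
  rewrite entry_inp //; last lia.
split; first lia.
have := @ones_inp n m s mn s1 => /leP /le_INR Ho.
have h := Rle_trans _ _ _ H1 Ho.
apply (Rmult_le_compat_l d) in h; last lra.
apply: Rle_trans h. right. field. lra.
Qed.

Lemma max_in (S : seq (seq bool)) (f : seq bool -> nat) : S != [::] ->
  exists2 X, X \in S & forall Y, Y \in S -> f Y <= f X.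
Proof.
elim: S => [|X S IH] // _.
case: (altP (S =P [::])) => [->|ne].
  by exists X => [|Y]; rewrite ?inE // => /eqP ->.
case: (IH ne) => Z ZS HZ.
case: (leqP (f Z) (f X)) => h.
  exists X; first exact: mem_head.
  move=> Y; rewrite inE => /orP [/eqP -> //|/HZ h']; exact: leq_trans h' h.
exists Z; first by rewrite inE ZS orbT.
move=> Y; rewrite inE => /orP [/eqP -> |/HZ //]; exact: ltnW.
Qed.

Lemma sep (d : R) D n T j j' : 1 < D -> Rlt d (INR D) -> Rlt 0 d ->
  solves d n T -> D ^ j' <= n -> j < j' ->
  output T (inp n (D ^ j)) != output T (inp n (D ^ j')).
Proof.
move=> D1 dD d0 sol hj' jj'.
have D0 : 0 < D by apply: ltnW.
have hj : D ^ j <= n.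
  apply: leq_trans hj'; rewrite leq_exp2l //; exact: ltnW.
have [_ h1] := @region_inp n (D ^ j) d _ ltac:(by rewrite expn_gt0 D0) hj d0 (sol _ (@valid_inp _ _ hj)).
have [h2 _] := @region_inp n (D ^ j') d _ ltac:(by rewrite expn_gt0 D0) hj' d0 (sol _ (@valid_inp _ _ hj')).
apply/eqP => E; rewrite -E in h2.
have h3 : D * D ^ j <= n.+1 - output T (inp n (D ^ j)).
  apply: leq_trans h2; rewrite -expnS leq_exp2l //.
move/leP/le_INR: h3; rewrite mult_INR => h3.
have hp : Rlt 0 (INR (D ^ j)) by apply: lt_0_INR; apply/ltP; rewrite expn_gt0 D0.
have := Rle_trans _ _ _ h3 h1.
have : Rlt (Rmult d (INR (D ^ j))) (Rmult (INR D) (INR (D ^ j))).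
  by apply: Rmult_lt_compat_r.
lra.
Qed.

Lemma key (d : R) D n T : 1 < D -> Rlt d (INR D) -> Rlt 0 d -> 0 < n ->
  solves d n T -> exists X, valid_input n X /\ n < D ^ (2 ^ nqueries T X).
Proof.
move=> D1 dD d0 n0 sol.
pose K := (trunc_log D n).+1.
have DjK : forall j, j \in iota 0 K -> 1 <= D ^ j <= n.
  move=> j; rewrite mem_iota add0n /K ltnS => jK.
  rewrite expn_gt0 (ltnW D1) /=.
  apply: leq_trans (trunc_logP D1 n0). by rewrite leq_exp2l.
pose S := [seq inp n (D ^ j) | j <- iota 0 K].
have [X XS HX] := @max_in S (nqueries T) isT.
exists X; split.
  move: XS => /mapP [j /DjK /andP [_ h] ->]; exact: valid_inp.
have hb := @tree_bound T (nqueries T X) S HX.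
have hu : uniq (map (output T) S).
  rewrite -map_comp map_inj_in_uniq ?iota_uniq //.
  move=> j j' hj hj' /= E.
  case: (ltngtP j j') => h //.
    by move: (@sep d D n T j j' D1 dD d0 sol (andP (DjK j' hj')).2 h); rewrite E eqxx.
  by move: (@sep d D n T j' j D1 dD d0 sol (andP (DjK j hj)).2 h); rewrite E eqxx.
rewrite undup_id // size_map /S size_map size_iota in hb.
apply: leq_trans (trunc_log_ltn n D1) _.
rewrite leq_exp2l //.
Qed.

Lemma INR_expn (m k : nat) : INR (m ^ k) = Rpow_def.pow (INR m) k.
Proof.
elim: k => [|k IH]; first by rewrite expn0.
by rewrite expnS mult_INR IH.
Qed.

Open Scope R_scope.

Lemma ln2_pos : 0 < ln 2.
Proof. have := ln_lt_2; lra. Qed.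

Lemma INR2 : INR 2 = 2.
Proof. by []. Qed.

Lemma log2_pow (k : nat) : log2 (INR (2 ^ k)) = INR k.
Proof.
rewrite /log2 INR_expn ln_pow INR2; last lra.
have := ln2_pos; move=> h; field; lra.
Qed.

Lemma log2_le x y : 0 < x -> x <= y -> log2 x <= log2 y.
Proof.
move=> x0 [xy|<-]; last lra.
rewrite /log2 INR2 /Rdiv; apply: Rmult_le_compat_r.
  by apply: Rlt_le; apply: Rinv_0_lt_compat; apply: ln2_pos.
by apply: Rlt_le; apply: ln_increasing.
Qed.

Lemma log2_lt x y : 0 < x -> x < y -> log2 x < log2 y.
Proof.
move=> x0 xy.
rewrite /log2 INR2 /Rdiv; apply: Rmult_lt_compat_r.
  by apply: Rinv_0_lt_compat; apply: ln2_pos.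
by apply: ln_increasing.
Qed.

Lemma log2_mult x y : 0 < x -> 0 < y -> log2 (x * y) = log2 x + log2 y.
Proof.
move=> x0 y0; rewrite /log2 ln_mult //. field. rewrite INR2; have := ln2_pos; lra.
Qed.

Lemma log2_pos x : 1 < x -> 0 < log2 x.
Proof.
move=> h; rewrite /log2 INR2 /Rdiv; apply: Rmult_lt_0_compat.
  rewrite -ln_1; apply: ln_increasing; lra.
by apply: Rinv_0_lt_compat; apply: ln2_pos.
Qed.

Lemma log2_ge1 x : 2 <= x -> 1 <= log2 x.
Proof.
move=> h; have -> : 1 = log2 (INR (2 ^ 1)) by rewrite log2_pow.
apply: log2_le => //; rewrite /=; lra.
Qed.
Close Scope R_scope.

Theorem corollary1 (eps d : R) :
  Rlt (INR 0) eps -> Rlt eps (INR 1) -> Rlt (INR 1) d ->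
  exists N : nat, forall n : nat, (N <= n)%N ->
    forall T : dtree, solves d n T ->
      exists X : seq bool, valid_input n X /\
        Rle (Rmult (Rminus (INR 1) eps) (log2 (log2 (INR n))))
            (INR (nqueries T X)).
Proof.
rewrite /= => e0 e1 d1.
have [D0 HD0] := INR_unbounded d.
pose D := D0.+2.
have HD : Rle 2 (INR D) by rewrite /D !S_INR; have := pos_INR D0; lra.
have dD : Rlt d (INR D) by rewrite /D !S_INR; have := pos_INR D0; lra.
pose a := log2 (INR D).
have apos : Rlt 0 a by apply: log2_pos; lra.
pose c1 := log2 a.
have [M HM] := INR_unbounded (Rdiv c1 eps).
exists (2 ^ (2 ^ M))%N => n Nn T sol.
have n0 : (0 < n)%N by apply: leq_trans Nn; rewrite expn_gt0.
have [X [vX hQ]] := @key d D n T (erefl _) dD ltac:(lra) n0 sol.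
exists X; split => //.
set Q := nqueries T X in hQ *.
have p2M : Rlt 0 (INR (2 ^ M)) by apply: lt_0_INR; apply/ltP; rewrite expn_gt0.
have hN : Rle (INR (2 ^ (2 ^ M))) (INR n) by apply: le_INR; apply/leP.
have hN0 : Rlt 0 (INR (2 ^ (2 ^ M))) by apply: lt_0_INR; apply/ltP; rewrite expn_gt0.
have L1 : Rle (INR (2 ^ M)) (log2 (INR n)).
  by rewrite -log2_pow; apply: log2_le.
have LLge : Rle (INR M) (log2 (log2 (INR n))).
  by rewrite -log2_pow; apply: log2_le.
have hn : Rlt (INR n) (INR (D ^ (2 ^ Q))) by apply: lt_INR; apply/ltP.
have Dpos : Rlt 0 (INR D) by lra.
have hlD : log2 (INR (D ^ (2 ^ Q))) = Rmult (INR (2 ^ Q)) a.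
  rewrite /a /log2 INR_expn ln_pow //. rewrite /Rdiv Rmult_assoc //.
have npos : Rlt 0 (INR n) by lra.
have L2 : Rlt (log2 (INR n)) (Rmult (INR (2 ^ Q)) a).
  by rewrite -hlD; apply: log2_lt.
have p2Q : Rlt 0 (INR (2 ^ Q)) by apply: lt_0_INR; apply/ltP; rewrite expn_gt0.
have LLlt : Rlt (log2 (log2 (INR n))) (Rplus (INR Q) c1).
  rewrite -(log2_pow Q) /c1 -log2_mult //. apply: log2_lt => //. lra.
have hc : Rlt c1 (Rmult eps (INR M)).
  have := Rmult_lt_compat_l eps _ _ e0 HM.
  have -> : Rmult eps (Rdiv c1 eps) = c1 by field; lra.
  lra.
nra.
Qed.
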